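(* Let $G_1,G_2$ be ordered cores. If there is an order-preserving homomorphism from $G_1$ to $G_2$ and an order-preserving homomorphism from $G_2$ to $G_1$, then there is an order-preserving isomorphism between $G_1$ and $G_2$.
   Context: All graphs are undirected with vertex sets that are subsets of $\mathbb{N}$ (so linearly ordered); subgraphs inherit the vertex labels. An order-preserving homomorphism from $G$ to $G'$ is a map $f:V(G)\to V(G')$ with $f(i)\le f(j)$ whenever $i\le j$ and $\{f(i),f(j)\}\in E(G')$ for every $\{i,j\}\in E(G)$. An order-preserving isomorphism is an order-preserving homomorphism that is a graph isomorphism. The ordered core of $G$ is a subgraph of $G$ with the smallest number of vertices among subgraphs to which $G$ has an order-preserving homomorphism; $G$ is an ordered core if it is the ordered core of itself (i.e. there is no order-preserving homomorphism from $G$ to a subgraph of $G$ with fewer vertices). *)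

(* Defs.v *)
From HB Require Import structures.
From mathcomp Require Import all_boot.
From mathcomp Require Import finmap.
Set Implicit Arguments. Unset Strict Implicit. Unset Printing Implicit Defensive.
Local Open Scope fset_scope.

Record graph := Graph { V : {fset nat}; E : rel nat }.

Definition is_graph (G : graph) : Prop :=
  [/\ (forall x y, E G x y -> E G y x),
      (forall x, ~~ E G x x) &
      (forall x y, E G x y -> (x \in V G) && (y \in V G))].

Definition subgraph (H G : graph) : Prop :=
  is_graph H /\ V H `<=` V G /\ (forall x y, E H x y -> E G x y).

Definition op_hom (f : nat -> nat) (G G' : graph) : Prop :=
  [/\ (forall i, i \in V G -> f i \in V G'),
      (forall i j, i \in V G -> j \in V G -> i <= j -> f i <= f j) &
      (forall i j, E G i j -> E G' (f i) (f j))].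

Definition op_iso (f : nat -> nat) (G G' : graph) : Prop :=
  [/\ op_hom f G G',
      {in V G &, injective f},
      (forall y, y \in V G' -> exists2 x, x \in V G & f x = y) &
      (forall i j, i \in V G -> j \in V G -> E G' (f i) (f j) -> E G i j)].

Definition ordered_core (G : graph) : Prop :=
  is_graph G /\
  ~ (exists (H : graph) (f : nat -> nat),
        subgraph H G /\ #|` V H| < #|` V G| /\ op_hom f G H).

(* Main.v *)
Require Import Defs.
From mathcomp Require Import all_boot.
From mathcomp Require Import finmap zify.
Local Open Scope fset_scope.
Set Implicit Arguments.

Lemma inj_card (A B : {fset nat}) (h : nat -> nat) :
  {in A &, injective h} -> (forall x, x \in A -> h x \in B) -> (#|` A| <= #|` B|)%N.
Proof.
move=> /card_in_imfsetP/eqP <- hAB; apply: fsubset_leq_card.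
by apply/fsubsetP => y /imfsetP [x xA ->]; apply: hAB.
Qed.

Lemma mono_inj_id (S : {fset nat}) (h : nat -> nat) :
  (forall x, x \in S -> h x \in S) ->
  (forall i j, i \in S -> j \in S -> (i <= j)%N -> (h i <= h j)%N) ->
  {in S &, injective h} -> forall x, x \in S -> h x = x.
Proof.
move=> hS hm hi x xS.
case: (ltngtP (h x) x) => // hx; exfalso.
- pose A := [fset y in S | (y <= x)%N]; pose B := [fset y in S | (y <= h x)%N].
  have c1 : (#|` A| <= #|` B|)%N.
    apply: inj_card.
      move=> a b; rewrite !inE => /andP[aS _] /andP[bS _]; exact: hi.
    move=> y; rewrite !inE => /andP[yS yx]; rewrite hS //=; exact: hm.
  have c2 : (#|` B| <= #|` A `\ x|)%N.
    apply: fsubset_leq_card; apply/fsubsetP => y; rewrite !inE => /andP[yS yx].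
    rewrite yS /=; apply/andP; split.
      by apply/eqP => e; subst y; rewrite leqNgt hx in yx.
    exact: leq_trans yx (ltnW hx).
  have c3 := cardfsD1 x A.
  have xA : x \in A by rewrite !inE xS leqnn.
  rewrite xA in c3; move: c1 c2 c3 => /=; lia.
- pose A := [fset y in S | (x <= y)%N]; pose B := [fset y in S | (h x <= y)%N].
  have c1 : (#|` A| <= #|` B|)%N.
    apply: inj_card.
      move=> a b; rewrite !inE => /andP[aS _] /andP[bS _]; exact: hi.
    move=> y; rewrite !inE => /andP[yS yx]; rewrite hS //=; exact: hm.
  have c2 : (#|` B| <= #|` A `\ x|)%N.
    apply: fsubset_leq_card; apply/fsubsetP => y; rewrite !inE => /andP[yS yx].
    rewrite yS /=; apply/andP; split.
      by apply/eqP => e; subst y; rewrite leqNgt hx in yx.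
    exact: leq_trans (ltnW hx) yx.
  have c3 := cardfsD1 x A.
  have xA : x \in A by rewrite !inE xS leqnn.
  rewrite xA in c3; move: c1 c2 c3 => /=; lia.
Qed.

Lemma core_inj (G : graph) (h : nat -> nat) :
  ordered_core G -> op_hom h G G -> {in V G &, injective h}.
Proof.
move=> [[Gs Gl Gv] Hc] [hV hm hE].
apply/card_in_imfsetP; apply/negPn/negP => Hne; apply: Hc.
pose I := h @` V G.
exists (Graph I (fun a b => [&& a \in I, b \in I & E G a b])), h.
have IV : I `<=` V G by apply/fsubsetP => y /imfsetP [x xV ->]; exact: hV.
split; [split; [|split]|split].
- split => /=.
  + by move=> x y /and3P[a b c]; rewrite a b Gs.
  + by move=> x; rewrite (negbTE (Gl x)) !andbF.
  + by move=> x y /and3P[a b c]; rewrite a b.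
- exact: IV.
- by move=> x y /= /and3P[].
- by rewrite ltn_neqAle Hne leq_imfset_card.
- split => /=.
  + by move=> i iV; apply/imfsetP; exists i.
  + exact: hm.
  + move=> i j eij; have /andP[iV jV] := Gv _ _ eij.
    rewrite hE // andbT; apply/andP; split; apply/imfsetP; [exists i|exists j] => //.
Qed.

Lemma comp_hom (f g : nat -> nat) G1 G2 G3 :
  op_hom f G1 G2 -> op_hom g G2 G3 -> op_hom (fun x => g (f x)) G1 G3.
Proof.
move=> [f1 f2 f3] [g1 g2 g3]; split.
- by move=> i iV; apply: g1; apply: f1.
- by move=> i j iV jV ij; apply: g2; [apply: f1|apply: f1|apply: f2].
- by move=> i j e; apply: g3; apply: f3.
Qed.

Lemma core_id (G : graph) (h : nat -> nat) :
  ordered_core G -> op_hom h G G -> forall x, x \in V G -> h x = x.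
Proof.
move=> C H; have hi := core_inj C H; case: H => hV hm _.
exact: mono_inj_id hV hm hi.
Qed.

Theorem proposition4p3 (G1 G2 : graph) :
  ordered_core G1 -> ordered_core G2 ->
  (exists f, op_hom f G1 G2) -> (exists g, op_hom g G2 G1) ->
  exists h, op_iso h G1 G2.
Proof.
move=> C1 C2 [f Hf] [g Hg].
have gf := core_id C1 (comp_hom Hf Hg).
have fg := core_id C2 (comp_hom Hg Hf).
exists f; split => //.
- by move=> x y xV yV e; rewrite -(gf x xV) -(gf y yV) e.
- by move=> y yV; exists (g y); [case: Hg => ? _ _; auto | exact: fg].
- move=> i j iV jV e; case: Hg => _ _ g3.
  by rewrite -(gf i iV) -(gf j jV); apply: g3.
Qed.
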